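(* Let $C$ be a reduced singular plane curve of degree $d$ in $\mathbb{P}^2_{\mathbb{K}}$ ($\mathbb{K}$ algebraically closed), and let $T$ be the set of singular points of $C$. Then $H(C)<-1$ if and only if $|T|>0$ and $H(C,T)<-1$; and in this case $H(C)=H(C,U)$ for some nonempty subset $U\subseteq T$.
   Context: For a reduced plane curve $C$ of degree $d$ and a nonempty finite set $S\subseteq\mathbb{P}^2$, $H(C,S)=\frac{d^2-\sum_{p\in S}(\mathrm{mult}_pC)^2}{|S|}$, where $\mathrm{mult}_pC$ is the largest $k$ such that the defining form of $C$ lies in $I(p)^k$ (so it is $0$ for $p\notin C$). $H(C)=\inf\{H(C,S): S\subseteq\mathbb{P}^2,\ 0<|S|<\infty\}$. *)

(* Defs.v *)
From HB Require Import structures.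
From Stdlib Require Import ClassicalEpsilon.
From mathcomp Require Import all_boot all_order all_algebra.
From mathcomp Require Import mpoly.
From mathcomp Require Import classical_sets reals ereal.
From mathcomp Require Import Rstruct.

Set Implicit Arguments.
Unset Strict Implicit.
Unset Printing Implicit Defensive.

Import Order.TTheory GRing.Theory Num.Theory.
Local Open Scope ring_scope.

Notation plform K := (mpoly.mpoly 3 K).

Section PlaneCurves.
Variable K : closedFieldType.

(* A point of P^2 is represented by its normalized homogeneous coordinates:
   the first nonzero coordinate equals 1.  This gives a bijection between
   such vectors and the points of P^2. *)
Definition normalized (v : 'rV[K]_3) : bool :=
  [exists i : 'I_3, (v ord0 i == 1) && [forall j : 'I_3, (j < i)%N ==> (v ord0 j == 0)]].

Definition P2point := {v : 'rV[K]_3 | normalized v}.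

Definition eval_at (f : plform K) (p : P2point) (c : K) : K :=
  mpoly.meval (fun i : 'I_3 => c * (val p) ord0 i) f.

(* I(p): the ideal of polynomials vanishing at (every representative of) p,
   i.e. on the line through the origin corresponding to p. *)
Definition in_Ip (f : plform K) (p : P2point) : Prop := forall c : K, eval_at f p c = 0.

Definition in_Ip_pow (F : plform K) (p : P2point) (k : nat) : Prop :=
  exists (n : nat) (g : 'I_n -> plform K) (h : 'I_n -> 'I_k -> plform K),
    (forall i j, in_Ip (h i j) p) /\ F = \sum_(i < n) g i * \prod_(j < k) h i j.

(* mult_p C: the largest k with F in I(p)^k (well defined for F != 0;
   it is 0 when p is not on C). *)
Definition mult (F : plform K) (p : P2point) : nat :=
  epsilon (inhabits 0%N) (fun k => in_Ip_pow F p k /\ ~ in_Ip_pow F p k.+1).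

Definition singular_point (F : plform K) (p : P2point) : Prop := (2 <= mult F p)%N.

Definition reduced (F : plform K) : Prop :=
  forall g h : plform K, F = g * g * h -> (mpoly.msize g <= 1)%N.

Definition plane_curve (F : plform K) (d : nat) : Prop :=
  F != 0 /\ F \is mpoly.ishomog1 d mpoly.mdeg.

Definition Hloc (F : plform K) (d : nat) (S : seq P2point) : rat :=
  ((d ^ 2)%:R - (\sum_(p <- S) (mult F p ^ 2)%N)%:R) / (size S)%:R.

Definition finite_nonempty (S : seq P2point) : Prop := uniq S /\ S != [::].

Definition Hglob (F : plform K) (d : nat) : \bar Rdefinitions.R :=
  ereal_inf [set ((ratr (Hloc F d S) : Rdefinitions.R)%:E) | S in finite_nonempty].

End PlaneCurves.

(* Main.v *)
Require Import Defs.
From HB Require Import structures.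
From mathcomp Require Import all_boot all_order all_algebra.
From mathcomp Require Import mpoly.
From mathcomp Require Import classical_sets reals ereal.
From mathcomp Require Import Rstruct.
From mathcomp Require Import lra.
Import Order.TTheory GRing.Theory Num.Theory.
Local Open Scope ring_scope.
Set Implicit Arguments.
Unset Strict Implicit.
Section H.
Variable X : eqType.
Variable D : nat.
Variable m : X -> nat.

Definition hh (U : seq X) : rat :=
  ((D ^ 2)%:R - (\sum_(p <- U) (m p ^ 2)%N)%:R) / (size U)%:R.

Fixpoint subs (s : seq X) : seq (seq X) :=
  match s with [::] => [:: [::]] | x :: s' => subs s' ++ map (cons x) (subs s') end.

Lemma filter_in_subs (P : pred X) s : seq.filter P s \in subs s.
Proof.
elim: s => [|x s IH] /=; first exact: mem_head.
rewrite mem_cat; case: (P x); last by rewrite IH.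
have inj : injective (cons x) by move=> a b [].
by rewrite (mem_map inj) IH orbT.
Qed.

Lemma exists_min (L : seq (seq X)) (f : seq X -> rat) : L != [::] ->
  exists2 x, x \in L & forall y, y \in L -> f x <= f y.
Proof.
elim: L => [|a L IH] //= _.
case: L IH => [|b L] IH.
  by exists a; rewrite ?inE // => y; rewrite inE => /eqP ->.
have [x xL xmin] := IH isT.
case: (leP (f a) (f x)) => h.
  exists a; first exact: mem_head.
  move=> y; rewrite inE => /orP[/eqP->//|/xmin]; exact: le_trans.
exists x; first by rewrite inE xL orbT.
move=> y; rewrite inE => /orP[/eqP->|/xmin//]; exact: ltW.
Qed.

Lemma key (S T : seq X) : uniq S -> uniq T -> S != [::] ->
  (forall p, p \notin T -> (m p <= 1)%N) ->
  hh S < -1 -> seq.filter (mem S) T != [::] /\ hh (seq.filter (mem S) T) <= hh S.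
Proof.
move=> uS uT nS m1 hS.
set I := seq.filter (mem S) T.
have pI : perm_eq (seq.filter (mem T) S) I.
  apply: uniq_perm; rewrite ?filter_uniq // => p.
  by rewrite !mem_filter andbC.
have sumS : (\sum_(p <- S) (m p ^ 2)%N =
   \sum_(p <- I) (m p ^ 2)%N + \sum_(p <- S | p \notin T) (m p ^ 2)%N)%N.
  rewrite (bigID (mem T)) /= -(perm_big _ pI) big_filter //.
have sJ : (\sum_(p <- S | p \notin T) (m p ^ 2)%N <= count (predC (mem T)) S)%N.
  rewrite -sum1_count; apply: leq_sum => p /m1.
  by case: (m p) => [|[|]].
have szS : size S = (size I + count (predC (mem T)) S)%N.
  by rewrite -(perm_size pI) size_filter count_predC.
move: hS; rewrite /hh sumS szS.
set n := size I; set k := count _ S; set a := \sum_(p <- I) _; set b := \sum_(p <- S | _) _.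
move: sJ; rewrite -/b -/k => sJ.
have Spos : (0 < size S)%N by case: (S) nS.
have npos : (0 < n + k)%N by rewrite -szS.
rewrite natrD ltr_pdivrMr ?ltr0n // => hS.
have bk : (b%:R <= k%:R :> rat) by rewrite ler_nat.
have D0 : (0 <= (D ^ 2)%:R :> rat) by [].
have n0 : (0 < n)%N.
  rewrite lt0n; apply/negP => /eqP n0; move: hS.
  have -> : a = 0%N.
    rewrite /a; move: n0; rewrite /n; case: (I) => //= _.
    by rewrite big_nil.
  rewrite n0 natrD !add0r; lra.
split; first by move: n0; rewrite /n; case: (I).
set c := ((D ^ 2)%:R - a%:R) / n%:R.
have npos' : (0 < n%:R :> rat) by rewrite ltr0n.
have ac : (D ^ 2)%:R - a%:R = c * n%:R by rewrite /c divfK // gt_eqF.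
have k0 : (0 <= k%:R :> rat) by [].
have b0 : (0 <= b%:R :> rat) by [].
have c1 : c < -1.
  have : c * n%:R < - n%:R by move: hS; rewrite natrD -ac; lra.
  by rewrite -mulN1r ltr_pM2r.
rewrite -/c natrD ler_pdivlMr; last by rewrite -natrD ltr0n.
have -> : (D ^ 2)%:R - (a%:R + b%:R) = c * n%:R - b%:R :> rat by rewrite -ac; lra.
nra.
Qed.

Lemma extend (U T : seq X) : uniq U -> uniq T -> U != [::] -> {subset U <= T} ->
  (forall p, p \in T -> (2 <= m p)%N) -> hh U < -1 -> hh T < -1.
Proof.
move=> uU uT nU sUT m2 hU.
have pI : perm_eq (seq.filter (mem U) T) U.
  apply: uniq_perm; rewrite ?filter_uniq // => p.
  rewrite mem_filter; apply/andP/idP => [[]//|pU]; split => //; exact: sUT.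
have sumT : (\sum_(p <- T) (m p ^ 2)%N =
   \sum_(p <- U) (m p ^ 2)%N + \sum_(p <- T | p \notin U) (m p ^ 2)%N)%N.
  by rewrite (bigID (mem U)) /= -(perm_big _ pI) big_filter.
have sJ : (4 * count (predC (mem U)) T <= \sum_(p <- T | p \notin U) (m p ^ 2)%N)%N.
  rewrite -sum1_count big_distrr /= big_seq_cond [X in (_ <= X)%N]big_seq_cond.
  apply: leq_sum => p /andP[/m2 h _]; rewrite muln1.
  by rewrite (leq_trans _ (leq_mul h h)).
have szT : size T = (size U + count (predC (mem U)) T)%N.
  by rewrite -(perm_size pI) size_filter count_predC.
move: hU; rewrite /hh sumT szT.
set n := size U; set k := count _ T; set a := \sum_(p <- U) _; set b := \sum_(p <- T | _) _.
move: sJ; rewrite -/b -/k => sJ.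
have npos : (0 < n)%N by rewrite /n; case: (U) nU.
rewrite ltr_pdivrMr ?ltr0n // => hU.
rewrite !natrD ltr_pdivrMr; last by rewrite -natrD ltr0n addn_gt0 npos.
have bk : (4 * k%:R <= b%:R :> rat) by rewrite -natrM ler_nat.
have k0 : (0 <= k%:R :> rat) by [].
lra.
Qed.
End H.

Theorem theorem2p20 (K : closedFieldType) (F : plform K) (d : nat)
  (T : seq (P2point K)) :
  plane_curve F d -> reduced F ->
  (exists p, singular_point F p) ->
  uniq T -> (forall p, p \in T <-> singular_point F p) ->
  ((Hglob F d < (-1)%:E)%E <-> (T != [::] /\ Hloc F d T < -1)) /\
  ((Hglob F d < (-1)%:E)%E ->
     exists U : seq (P2point K),
       [/\ uniq U, U != [::], {subset U <= T} &
           Hglob F d = ((ratr (Hloc F d U) : Rdefinitions.R)%:E)]).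
Proof.
move=> _ _ [p0 sp0] uT Tsing.
have m1 : forall p, p \notin T -> (mult F p <= 1)%N.
  move=> p pT; rewrite leqNgt; apply/negP => h; move/negP: pT; apply.
  exact/Tsing.
have m2 : forall p, p \in T -> (2 <= mult F p)%N by move=> p /Tsing.
have HE : forall U, Hloc F d U = hh d (mult F) U by [].
have T0 : T != [::] by move/Tsing: sp0; case: (T).
have r1 : ratr (-1) = -1 :> Rdefinitions.R by rewrite rmorphN1.
have part1 : (Hglob F d < (-1)%:E)%E <-> hh d (mult F) T < -1.
  split.
    case/ereal_inf_lt => y [S [uS nS] <-].
    rewrite lte_fin -r1 ltr_rat -HE => hS.
    have [nI hI] := key uS uT nS m1 hS.
    apply: (extend (U := seq.filter (mem S) T)) => //.
    - exact: filter_uniq.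
    - by move=> p; rewrite mem_filter => /andP[].
    - exact: le_lt_trans hS.
  move=> hT; apply: (le_lt_trans (ereal_inf_lbound _)).
    by exists T.
  by rewrite lte_fin -r1 ltr_rat.
split.
  by rewrite part1; split => [h|[]//]; split.
move=> /part1 hT.
set L := [seq U <- subs T | (U != [::]) && uniq U && all (mem T) U].
have TL : T \in L.
  rewrite mem_filter T0 uT /=; apply/andP; split; first by apply/allP.
  by have := filter_in_subs predT T; rewrite filter_predT.
have L0 : L != [::] by move: TL; case: (L).
have [U0 U0L U0min] := exists_min (hh d (mult F)) L0.
move: (U0L); rewrite mem_filter => /andP[/andP[/andP[nU0 uU0] /allP aU0] _].
exists U0; split => //.
apply/le_anti/andP; split.
  by apply: ereal_inf_lbound; exists U0.
apply/ereal_infP => y [S [uS nS] <-].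
rewrite lee_fin ler_rat.
rewrite !HE; have [hS|hS] := ltP (hh d (mult F) S) (-1).
  have [nI hI] := key uS uT nS m1 hS.
  apply: le_trans hI; apply: U0min.
  rewrite mem_filter nI filter_uniq //= filter_in_subs andbT.
  by apply/allP => p; rewrite mem_filter => /andP[].
apply: le_trans hS; apply: ltW; apply: le_lt_trans hT; exact: U0min.
Qed.
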